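(* Let $k$ be a field and $V$ a $k$-vector space of dimension $n>1$. Define $b:(k\oplus V)\times(k\oplus V)\to V$ by $b(\alpha\oplus u,\beta\oplus v)=\alpha v-\beta u$. Then $b$ is alternating and $$\operatorname{Adj}(b)\cong\left\{\begin{bmatrix}\alpha1_k & h\\ 0 & \beta 1_V\end{bmatrix}: h\in\hom(k,V),\ \alpha,\beta\in k\right\},$$ acting on $k\oplus V$ by matrix multiplication, with involution $\begin{bmatrix}\alpha1_k & h\\ 0&\beta1_V\end{bmatrix}^*=\begin{bmatrix}\beta1_k&-h\\0&\alpha1_V\end{bmatrix}$. In particular the Jacobson radical of $\operatorname{Adj}(b)$ is $\left\{\begin{bmatrix}0&h\\0&0\end{bmatrix}:h\in\hom(k,V)\right\}$, $\operatorname{Adj}(b)/\operatorname{rad}\operatorname{Adj}(b)\cong k\oplus k$ with the exchange involution $(x,y)\mapsto(y,x)$, and $b$ is $\perp$-indecomposable (of exchange type).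
   Context: $\operatorname{Adj}(b)$ is the set of $f\in\operatorname{End}(k\oplus V)$ for which there is $f^*$ with $b(uf,v)=b(u,vf^* )$ for all $u,v$, with involution $f\mapsto f^*$. $b$ is $\perp$-indecomposable if $k\oplus V$ has no decomposition into a set $\mathcal{X}\neq\{k\oplus V\}$ of pairwise $b$-orthogonal subspaces generating the space with no proper subset generating it. *)

(* Defs.v *)
From HB Require Import structures.
From mathcomp Require Import all_boot all_order all_algebra.
Set Implicit Arguments. Unset Strict Implicit. Unset Printing Implicit Defensive.
Import GRing.Theory.
Local Open Scope ring_scope.

(* Conventions: V = 'rV[k]_n (an n-dimensional k-space), k (+) V = 'rV[k]_(1 + n).
   Endomorphisms of a row space 'rV_m are matrices 'M_m acting on the RIGHT
   (u f := u *m f), matching the paper's notation b(uf, v) = b(u, v f^* ). *)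

Section Defs.
Variable k : fieldType.

Definition bmap (n : nat) (x y : 'rV[k]_(1 + n)) : 'rV[k]_n :=
  (lsubmx x) 0 0 *: rsubmx y - (lsubmx y) 0 0 *: rsubmx x.

Definition alternating (m : nat) (W : zmodType) (b : 'rV[k]_m -> 'rV[k]_m -> W) :=
  forall u, b u u = 0.

Definition adjoint_pair (m : nat) (W : zmodType) (b : 'rV[k]_m -> 'rV[k]_m -> W)
  (f g : 'M[k]_m) := forall u v, b (u *m f) v = b u (v *m g).

Definition Adj (m : nat) (W : zmodType) (b : 'rV[k]_m -> 'rV[k]_m -> W)
  (f : 'M[k]_m) : Prop := exists g, adjoint_pair b f g.

Definition left_ideal (m : nat) (A I : 'M[k]_m -> Prop) :=
  [/\ forall x, I x -> A x,
      I 0,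
      forall x y, I x -> I y -> I (x - y) &
      forall a x, A a -> I x -> I (a *m x)].

Definition maximal_left_ideal (m : nat) (A I : 'M[k]_m -> Prop) :=
  [/\ left_ideal A I, ~ I 1%:M &
      forall J, left_ideal A J -> ~ J 1%:M -> (forall x, I x -> J x) ->
        forall x, J x -> I x].

Definition jacobson_rad (m : nat) (A : 'M[k]_m -> Prop) (x : 'M[k]_m) : Prop :=
  A x /\ forall I, maximal_left_ideal A I -> I x.

Definition generates (vT : vectType k) (X : {vspace vT} -> Prop) :=
  forall Wsp : {vspace vT}, (forall U, X U -> (U <= Wsp)%VS) -> Wsp = fullv.

Definition perp_decomposition (vT : vectType k) (W : zmodType)
  (b : vT -> vT -> W) (X : {vspace vT} -> Prop) :=
  [/\ (forall U U', X U -> X U' -> U <> U' ->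
         forall u v, u \in U -> v \in U' -> b u v = 0),
      generates X &
      forall Y, (forall U, Y U -> X U) -> (exists U, X U /\ ~ Y U) -> ~ generates Y].

Definition perp_indecomposable (vT : vectType k) (W : zmodType) (b : vT -> vT -> W) :=
  forall X, perp_decomposition b X -> forall U, X U <-> U = fullv.

End Defs.

(* Main.v *)
Require Import Defs.
From HB Require Import structures.
From mathcomp Require Import all_boot all_order all_algebra.
From Stdlib Require Import Classical.
From mathcomp Require Import ring.
Set Implicit Arguments. Unset Strict Implicit.
Import GRing.Theory.
Local Open Scope ring_scope.

Definition Mk (k : fieldType) (n : nat) (a c : k) (h : 'M[k]_(1, n)) : 'M[k]_(1 + n) :=
  block_mx (a%:M : 'M[k]_1) h 0 (c%:M : 'M[k]_n).

Arguments Mk {k n}.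

Lemma bmap_row (k : fieldType) (n : nat) (l l' : 'rV[k]_1) (r r' : 'rV[k]_n) :
  bmap (row_mx l r) (row_mx l' r') = l 0 0 *: r' - l' 0 0 *: r.
Proof. by rewrite /bmap !row_mxKl !row_mxKr. Qed.

Lemma mul_l11 (k : fieldType) (n : nat) (l : 'rV[k]_1) (h : 'M[k]_(1, n)) :
  l *m h = l 0 0 *: h.
Proof. by rewrite {1}(mx11_scalar l) mul_scalar_mx. Qed.

Lemma mulMk (k : fieldType) (n : nat) (l : 'rV[k]_1) (r : 'rV[k]_n) a c h :
  row_mx l r *m Mk a c h = row_mx (a *: l) (l 0 0 *: h + c *: r).
Proof.
by rewrite /Mk mul_row_block mulmx0 addr0 !mul_mx_scalar mul_l11.
Qed.

Lemma Mk_adj (k : fieldType) (n : nat) a c h :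
  adjoint_pair (@bmap k n) (Mk a c h) (Mk c a (- h)).
Proof.
move=> u v; rewrite -[u]hsubmxK -[v]hsubmxK !mulMk !bmap_row.
by apply/rowP => j; rewrite !mxE; ring.
Qed.

Lemma bmapB (k : fieldType) (n : nat) (u v1 v2 : 'rV[k]_(1 + n)) :
  bmap u (v1 - v2) = bmap u v1 - bmap u v2.
Proof. by apply/rowP => j; rewrite /bmap !mxE; ring. Qed.

Lemma b_nondeg (k : fieldType) (n : nat) (hn : (0 < n)%N) (w : 'rV[k]_(1 + n)) :
  (forall u, bmap u w = 0) -> w = 0.
Proof.
move=> H; rewrite -[w]hsubmxK.
have h1 := H (row_mx 1 0).
rewrite -[w]hsubmxK bmap_row in h1.
have h2 := H (row_mx 0 (delta_mx 0 (Ordinal hn))).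
rewrite -[w]hsubmxK bmap_row in h2.
have e1 : rsubmx w = 0.
  apply/rowP => j; move/rowP: h1 => /(_ j); rewrite !mxE /=.
  by rewrite mul1r mulr0 subr0.
have h3 : lsubmx w 0 0 = 0.
  move/rowP: h2 => /(_ (Ordinal hn)); rewrite e1 !mxE !eqxx /=.
  by rewrite mul0r mulr1 sub0r => /eqP; rewrite oppr_eq0 => /eqP.
rewrite e1; apply/rowP => j; rewrite mxE [RHS]mxE.
case: (split j) => i; [by rewrite ord1 h3 | by rewrite mxE].

Qed.

Lemma adj_uniq (k : fieldType) (n : nat) (hn : (0 < n)%N) (f g g' : 'M[k]_(1 + n)) :
  adjoint_pair (@bmap k n) f g -> adjoint_pair (@bmap k n) f g' -> g = g'.
Proof.
move=> H H'; apply/row_matrixP => i; rewrite !rowE.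
apply/eqP; rewrite -subr_eq0; apply/eqP; apply: (@b_nondeg k n hn) => u.
by rewrite bmapB -H -H' subrr.
Qed.

Lemma Adj_form (k : fieldType) (n : nat) (hn : (1 < n)%N) (f g : 'M[k]_(1 + n)) :
  adjoint_pair (@bmap k n) f g -> exists a c h, f = Mk a c h.
Proof.
move=> H.
have ef : f = block_mx (ulsubmx f) (ursubmx f) (dlsubmx f) (drsubmx f) by rewrite submxK.
have eg : g = block_mx (ulsubmx g) (ursubmx g) (dlsubmx g) (drsubmx g) by rewrite submxK.
set A := ulsubmx f in ef *; set B := ursubmx f in ef *; set C := dlsubmx f in ef *;
set D := drsubmx f in ef *.
set Ag := ulsubmx g in eg *; set Bg := ursubmx g in eg *; set Cg := dlsubmx g in eg *;
set Dg := drsubmx g in eg *.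
have eD : forall r : 'rV_n, r *m D = Ag 0 0 *: r.
  move=> r; have := H (row_mx 0 r) (row_mx 1 0).
  rewrite ef eg !mul_row_block !bmap_row.
  rewrite !mul0mx !mul1mx !add0r !addr0 => /rowP E; apply/rowP => j.
  have := E j; rewrite !mxE /= mulr0 mul1r mul0r !sub0r.
  by move/eqP; rewrite eqr_opp => /eqP.
have eC : forall i : 'I_n, C i 0 = 0.
  move=> i.
  have [j ji] : exists j : 'I_n, j != i.
    have h0 : (0 < n)%N by apply: ltn_trans hn.
    case: (eqVneq i (Ordinal h0)) => [->|ne]; last by exists (Ordinal h0); rewrite eq_sym.
    by exists (Ordinal hn); apply/eqP => /(congr1 val).
  have := H (row_mx 0 'e_i) (row_mx 0 'e_j).
  rewrite ef eg !mul_row_block !mul0mx !add0r !bmap_row -!rowE => /rowP /(_ j).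
  by rewrite !mxE !eqxx (negbTE ji) /= mulr1 !mul0r !mulr0 !subr0.
exists (A 0 0), (Ag 0 0), B; rewrite ef /Mk; congr block_mx.
- exact: mx11_scalar.
- by apply/colP => i; rewrite [RHS]mxE; apply: eC.
- by apply/row_matrixP => i; rewrite !rowE eD mul_mx_scalar.
Qed.

Section MkAlg.
Lemma Mk_mul (k : fieldType) (n : nat) (a c a' c' : k) (h h' : 'rV[k]_n) :
  Mk a c h *m Mk a' c' h' = Mk (a * a') (c * c') (a *: h' + c' *: h).
Proof.
rewrite /Mk mulmx_block !mulmx0 !mul0mx !addr0 add0r !mul_scalar_mx mul_mx_scalar.
by rewrite !scale_scalar_mx.
Qed.

Lemma Mk_add (k : fieldType) (n : nat) (a c a' c' : k) (h h' : 'rV[k]_n) :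
  Mk a c h + Mk a' c' h' = Mk (a + a') (c + c') (h + h').
Proof. by rewrite /Mk add_block_mx addr0 -!raddfD. Qed.

Lemma Mk_opp (k : fieldType) (n : nat) (a c : k) (h : 'rV[k]_n) :
  - Mk a c h = Mk (- a) (- c) (- h).
Proof. by rewrite /Mk opp_block_mx oppr0 -!raddfN. Qed.

Lemma Mk_sub (k : fieldType) (n : nat) (a c a' c' : k) (h h' : 'rV[k]_n) :
  Mk a c h - Mk a' c' h' = Mk (a - a') (c - c') (h - h').
Proof. by rewrite Mk_opp Mk_add. Qed.

Lemma Mk_scale (k : fieldType) (n : nat) (x a c : k) (h : 'rV[k]_n) :
  x *: Mk a c h = Mk (x * a) (x * c) (x *: h).
Proof. by rewrite /Mk scale_block_mx scaler0 -!scale_scalar_mx. Qed.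

Lemma Mk1 (k : fieldType) (n : nat) : (1%:M : 'M[k]_(1 + n)) = Mk 1 1 0.
Proof. by rewrite /Mk -scalar_mx_block. Qed.

Lemma Mk0 (k : fieldType) (n : nat) : (0 : 'M[k]_(1 + n)) = Mk 0 0 0.
Proof. by rewrite /Mk !raddf0 block_mx0. Qed.

Lemma Mk_inj (k : fieldType) (n : nat) (hn : (0 < n)%N) (a c a' c' : k) (h h' : 'rV[k]_n) :
  Mk a c h = Mk a' c' h' -> [/\ a = a', c = c' & h = h'].
Proof.
move/eq_block_mx => [e1 e2 _ e3]; split => //.
- by move/matrixP: e1 => /(_ 0 0); rewrite !mxE.
- by move/matrixP: e3 => /(_ (Ordinal hn) (Ordinal hn)); rewrite !mxE eqxx !mulr1n.
Qed.
End MkAlg.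

Lemma AdjE (k : fieldType) (n : nat) (hn : (1 < n)%N) (f : 'M[k]_(1 + n)) :
  Adj (@bmap k n) f <-> exists a c h, f = Mk a c h.
Proof.
split; first by case=> g H; exact: (Adj_form hn H).

by case=> a [c [h ->]]; exists (Mk c a (- h)); apply: Mk_adj.
Qed.

Lemma AdjMk (k : fieldType) (n : nat) (hn : (1 < n)%N) a c (h : 'rV[k]_n) :
  Adj (@bmap k n) (Mk a c h).
Proof. by apply/(AdjE hn); exists a, c, h. Qed.

Lemma jac1 (k : fieldType) (n : nat) (hn : (1 < n)%N) (h : 'rV[k]_n) I :
  maximal_left_ideal (Adj (@bmap k n)) I -> I (Mk 0 0 h).
Proof.
case=> [[IA I0 Isub Imul] not1 mx].
pose J x := exists y h', I y /\ x = y + Mk 0 0 h'.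
have JA : forall x, J x -> Adj (@bmap k n) x.
  move=> x [y [h' [Iy ->]]]; have /(AdjE hn) [a [c [h1 ->]]] := IA _ Iy.
  by rewrite Mk_add; apply: AdjMk.
have LJ : left_ideal (Adj (@bmap k n)) J.
  split => //.
  - by exists 0, 0; split => //; rewrite -Mk0 addr0.
  - move=> x x' [y [h' [Iy ->]]] [y' [h'' [Iy' ->]]].
    exists (y - y'), (h' - h''); split; first exact: Isub.
    have -> : Mk 0 0 (h' - h'') = Mk 0 0 h' - Mk 0 0 h'' by rewrite Mk_sub subr0.
    rewrite opprD !addrA; congr (_ + _); rewrite -!addrA; congr (_ + _); exact: addrC.
  - move=> a x /(AdjE hn) [a1 [c1 [h1 ->]]] [y [h' [Iy ->]]].
    exists (Mk a1 c1 h1 *m y), (a1 *: h' + 0 *: h1); split.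
      by apply: Imul => //; apply: AdjMk.
    by rewrite mulmxDr Mk_mul !mulr0.
have nJ1 : ~ J 1%:M.
  case=> y [h' [Iy e]]; apply: not1.
  have ey : y = Mk 1 1 (- h') by rewrite -[y]addr0 -(subrr (Mk 0 0 h')) addrA -e Mk1 Mk_sub !subr0 sub0r.
  have := Imul _ _ (AdjMk hn 1 1 h') Iy.
  by rewrite ey Mk_mul !mulr1 !scale1r addNr -Mk1.
have IJ : forall x, I x -> J x.
  by move=> x Ix; exists x, 0; split => //; rewrite -Mk0 addr0.
have := mx J LJ nJ1 IJ (Mk 0 0 h); apply.
by exists 0, h; split => //; rewrite add0r.
Qed.

Lemma max1 (k : fieldType) (n : nat) (hn : (1 < n)%N) :
  maximal_left_ideal (Adj (@bmap k n)) (fun x => exists c h, x = Mk 0 c h).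
Proof.
have h0 : (0 < n)%N by apply: ltn_trans hn.
split.
- split.
  + by move=> x [c [h ->]]; apply: AdjMk.
  + by exists 0, 0; rewrite -Mk0.
  + by move=> x y [c [h ->]] [c' [h' ->]]; exists (c - c'), (h - h'); rewrite Mk_sub subr0.
  + move=> a x /(AdjE hn) [a1 [c1 [h1 ->]]] [c [h ->]].
    by exists (c1 * c), (a1 *: h + c *: h1); rewrite Mk_mul mulr0.
- by case=> c [h]; rewrite Mk1 => /(Mk_inj h0) [/eqP]; rewrite oner_eq0.
- move=> J [JA J0 Jsub Jmul] nJ1 sub x Jx.
  have /(AdjE hn) [a [c [h ex]]] := JA _ Jx.
  case: (eqVneq a 0) => [a0|an0]; first by exists c, h; rewrite ex a0.
  exfalso; apply: nJ1.
  have J1 : J (Mk a 0 0).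
    have := Jsub _ _ Jx (sub _ (ex_intro _ c (ex_intro _ h erefl))).
    by rewrite ex Mk_sub !subrr subr0.
  have J2 : J (Mk 1 0 0).
    have := Jmul _ _ (AdjMk hn a^-1 0 0) J1.
    by rewrite Mk_mul mulVf // mulr0 scaler0 scale0r addr0.
  have J3 : J (Mk 0 1 0) by apply: sub; exists 1, 0.
  have := Jsub _ _ J2 (Jsub _ _ J0 J3).
  by rewrite sub0r Mk_opp Mk_sub Mk1 !oppr0 !opprK !addr0 !add0r.
Qed.

Lemma max2 (k : fieldType) (n : nat) (hn : (1 < n)%N) :
  maximal_left_ideal (Adj (@bmap k n)) (fun x => exists a h, x = Mk a 0 h).
Proof.
have h0 : (0 < n)%N by apply: ltn_trans hn.
split.
- split.
  + by move=> x [c [h ->]]; apply: AdjMk.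
  + by exists 0, 0; rewrite -Mk0.
  + by move=> x y [c [h ->]] [c' [h' ->]]; exists (c - c'), (h - h'); rewrite Mk_sub subr0.
  + move=> a x /(AdjE hn) [a1 [c1 [h1 ->]]] [c [h ->]].
    by exists (a1 * c), (a1 *: h + 0 *: h1); rewrite Mk_mul mulr0.
- by case=> c [h]; rewrite Mk1 => /(Mk_inj h0) [_ /eqP]; rewrite oner_eq0.
- move=> J [JA J0 Jsub Jmul] nJ1 sub x Jx.
  have /(AdjE hn) [a [c [h ex]]] := JA _ Jx.
  case: (eqVneq c 0) => [c0|cn0]; first by exists a, h; rewrite ex c0.
  exfalso; apply: nJ1.
  have J1 : J (Mk 0 c 0).
    have := Jsub _ _ Jx (sub _ (ex_intro _ a (ex_intro _ h erefl))).
    by rewrite ex Mk_sub !subrr subr0.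
  have J2 : J (Mk 0 1 0).
    have := Jmul _ _ (AdjMk hn 0 c^-1 0) J1.
    by rewrite Mk_mul mulVf // mulr0 !scaler0 addr0.
  have J3 : J (Mk 1 0 0) by apply: sub; exists 1, 0.
  have := Jsub _ _ J2 (Jsub _ _ J0 J3).
  by rewrite sub0r Mk_opp Mk_sub Mk1 !oppr0 !opprK !addr0 !add0r.
Qed.

Lemma jacE (k : fieldType) (n : nat) (hn : (1 < n)%N) (f : 'M[k]_(1 + n)) :
  jacobson_rad (Adj (@bmap k n)) f <-> exists h, f = Mk 0 0 h.
Proof.
have h0 : (0 < n)%N by apply: ltn_trans hn.
split.
- case=> /(AdjE hn) [a [c [h ->]]] H.
  have [c' [h' /(Mk_inj h0) [-> _ _]]] := H _ (max1 k hn).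
  have [a' [h'' /(Mk_inj h0) [_ -> _]]] := H _ (max2 k hn).
  by exists h.
- case=> h ->; split; first exact: AdjMk.
  by move=> I; apply: jac1.
Qed.

Lemma row1_eq0 (k : fieldType) (l : 'rV[k]_1) : l 0 0 = 0 -> l = 0.
Proof. by move=> h; apply/rowP => j; rewrite ord1 h mxE. Qed.

Lemma row_split0 (k : fieldType) (n : nat) (u : 'rV[k]_(1 + n)) :
  lsubmx u 0 0 = 0 -> rsubmx u = 0 -> u = 0.
Proof. by move=> h1 h2; rewrite -[u]hsubmxK (row1_eq0 h1) h2 row_mx0. Qed.

Lemma row_split_eq (k : fieldType) (n : nat) (x y : 'rV[k]_(1 + n)) :
  lsubmx x = lsubmx y -> rsubmx x = rsubmx y -> x = y.
Proof. by move=> h1 h2; rewrite -[x]hsubmxK -[y]hsubmxK h1 h2. Qed.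

Lemma perp_key (k : fieldType) (n : nat) (hn : (1 < n)%N)
  (X : {vspace 'rV[k]_(1 + n)} -> Prop) :
  perp_decomposition (@bmap k n) X -> forall U, X U -> U = 0%VS \/ U = fullv.
Proof.
have h0 : (0 < n)%N by apply: ltn_trans hn.
case=> orth gen _ U XU.
case: (classic (exists u, u \in U /\ lsubmx u 0 0 != 0)) => [[u [uU un0]]|nex].
  right; apply: gen => U' XU'.
  case: (eqVneq U' U) => [->|ne]; first exact: subvv.
  apply/subvP => w wU'.
  have e := orth _ _ XU XU' (fun E => ltac:(by rewrite E eqxx in ne)) u w uU wU'.
  have -> : w = (lsubmx w 0 0 / lsubmx u 0 0) *: u; last exact: memvZ.
  apply: row_split_eq.
    by apply/rowP => j; rewrite ord1 !mxE divfK //; move: un0; rewrite mxE.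
  have -> : rsubmx ((lsubmx w 0 0 / lsubmx u 0 0) *: u) =
            (lsubmx w 0 0 / lsubmx u 0 0) *: rsubmx u by apply/rowP => j; rewrite !mxE.
  apply: (scalerI un0); rewrite scalerA mulrCA divff // mulr1.
  by apply/eqP; rewrite -subr_eq0; apply/eqP; rewrite -e.
have nU : forall u, u \in U -> lsubmx u 0 0 = 0.
  move=> u uU; case: (eqVneq (lsubmx u 0 0) 0) => // ne; exfalso.
  by apply: nex; exists u.
case: (classic (exists u, u \in U /\ u != 0)) => [[u [uU un0]]|nex2].
  exfalso.
  have ur : rsubmx u != 0.
    by apply: contra un0 => /eqP ur; apply/eqP; apply: row_split0 => //; apply: nU.
  pose K := lker (linfun (@lsubmx k 1 1 n)).
  have memK : forall w, (w \in K) = (lsubmx w == 0) by move=> w; rewrite memv_ker lfunE.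
  have : K = fullv.
    apply: gen => U' XU'; apply/subvP => w wU'; rewrite memK; apply/eqP.
    apply: row1_eq0.
    case: (eqVneq U' U) => [eU|ne]; first by apply: nU; rewrite -eU.
    have := orth _ _ XU XU' (fun E => ltac:(by rewrite E eqxx in ne)) u w uU wU'.
    rewrite /bmap (nU _ uU) scale0r sub0r => /eqP; rewrite oppr_eq0 scaler_eq0.
    by rewrite (negbTE ur) orbF => /eqP.
  move=> eK; have := memvf (row_mx (1 : 'rV[k]_1) (0 : 'rV[k]_n)).
  rewrite -eK memK row_mxKl => /eqP /rowP /(_ 0); rewrite !mxE /= => /eqP.
  by rewrite oner_eq0.
left; apply/eqP; rewrite -subv0; apply/subvP => u uU; rewrite memv0.
by case: (eqVneq u 0) => // ne; exfalso; apply: nex2; exists u.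
Qed.

Lemma zero_neq_full (k : fieldType) (n : nat) :
  (0%VS : {vspace 'rV[k]_(1 + n)}) <> fullv.
Proof.
move=> eK; have := memvf (row_mx (1 : 'rV[k]_1) (0 : 'rV[k]_n)).
rewrite -eK memv0 => /eqP /(congr1 lsubmx); rewrite row_mxKl linear0 => /rowP /(_ 0).
by rewrite !mxE /= => /eqP; rewrite oner_eq0.
Qed.

Lemma perp_ind (k : fieldType) (n : nat) (hn : (1 < n)%N) :
  perp_indecomposable (@bmap k n).
Proof.
move=> X PD; have key := perp_key hn PD; case: PD => orth gen minim.
have Xf : X fullv.
  case: (classic (exists U, X U /\ U <> 0%VS)) => [[U [XU nU]]|nex].
    by case: (key U XU) => // eU; rewrite -eU.
  exfalso; apply: (@zero_neq_full k n); apply: gen => U XU.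
  have -> : U = 0%VS by apply: NNPP => nU; apply: nex; exists U.
  exact: subvv.
move=> U; split; last by move->.
move=> XU; case: (key U XU) => // eU; exfalso.
apply: (minim (fun V => V = fullv)).
- by move=> V ->.
- exists U; split => //; rewrite eU; exact: zero_neq_full.
- move=> W HW; have := HW fullv erefl.
  by move=> h; apply/eqP; rewrite eqEsubv h subvf.
Qed.

Definition phi (k : fieldType) (n : nat) (i0 : 'I_n) (f : 'M[k]_(1 + n)) : k * k :=
  (ulsubmx f 0 0, drsubmx f i0 i0).

Lemma phiMk (k : fieldType) (n : nat) (i0 : 'I_n) a c (h : 'rV[k]_n) :
  phi i0 (Mk a c h) = (a, c).
Proof. by rewrite /phi /Mk block_mxKul block_mxKdr !mxE !eqxx !mulr1n. Qed.

Theorem main (k : fieldType) (n : nat) (hn : (1 < n)%N) :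
  alternating (@bmap k n) /\
      (forall f, Adj (@bmap k n) f <-> exists a c h, f = Mk a c h) /\
      (forall a c h g, adjoint_pair (@bmap k n) (Mk a c h) g <-> g = Mk c a (- h)) /\
      (forall f, jacobson_rad (Adj (@bmap k n)) f <-> exists h, f = Mk 0 0 h) /\
      (exists phi : 'M[k]_(1 + n) -> k * k,
         (forall f g, Adj (@bmap k n) f -> Adj (@bmap k n) g ->
               phi (f + g) = ((phi f).1 + (phi g).1, (phi f).2 + (phi g).2)) /\
         (forall (c : k) f, Adj (@bmap k n) f -> phi (c *: f) = (c * (phi f).1, c * (phi f).2)) /\
         (forall f g, Adj (@bmap k n) f -> Adj (@bmap k n) g ->
               phi (f *m g) = ((phi f).1 * (phi g).1, (phi f).2 * (phi g).2)) /\
         phi 1%:M = (1, 1) /\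
         (forall p, exists f, Adj (@bmap k n) f /\ phi f = p) /\
         (forall f, Adj (@bmap k n) f -> (phi f = (0, 0) <-> jacobson_rad (Adj (@bmap k n)) f)) /\
         (forall f g, adjoint_pair (@bmap k n) f g -> phi g = ((phi f).2, (phi f).1))) /\
      perp_indecomposable (@bmap k n).
Proof.
have h0 : (0 < n)%N by apply: ltn_trans hn.
split; first by move=> u; rewrite /bmap subrr.
split; first by move=> f; apply: AdjE.
split.
  move=> a c h g; split; last by move->; apply: Mk_adj.
  by move=> H; apply: (adj_uniq h0 H); apply: Mk_adj.
split; first by move=> f; apply: jacE.
split; last exact: perp_ind.
exists (phi (Ordinal h0)).
split.
  by move=> f g /(AdjE hn) [a [c [h ->]]] /(AdjE hn) [a' [c' [h' ->]]]; rewrite Mk_add !phiMk.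
split.
  by move=> x f /(AdjE hn) [a [c [h ->]]]; rewrite Mk_scale !phiMk.
split.
  by move=> f g /(AdjE hn) [a [c [h ->]]] /(AdjE hn) [a' [c' [h' ->]]]; rewrite Mk_mul !phiMk.
split; first by rewrite Mk1 phiMk.
split.
  by case=> x y; exists (Mk x y 0); split; [apply: AdjMk | rewrite phiMk].
split.
  move=> f /(AdjE hn) [a [c [h ->]]]; rewrite phiMk jacE //; split.
    by case=> -> ->; exists h.
  by case=> h' /(Mk_inj h0) [-> -> _].
move=> f g H; have : Adj (@bmap k n) f by exists g.
move=> /(AdjE hn) [a [c [h ef]]]; rewrite ef in H *.
by rewrite (adj_uniq h0 H (Mk_adj a c h)) !phiMk.
Qed.

Theorem lemma7p13 (k : fieldType) (n : nat) (hn : (1 < n)%N) :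
  let b := @bmap k n in
  let M := fun (a c : k) (h : 'M[k]_(1, n)) =>
             (block_mx (a%:M : 'M[k]_1) h 0 (c%:M : 'M[k]_n) : 'M[k]_(1 + n)) in
  alternating b /\
      (forall f, Adj b f <-> exists a c h, f = M a c h) /\
      (forall a c h g, adjoint_pair b (M a c h) g <-> g = M c a (- h)) /\
      (forall f, jacobson_rad (Adj b) f <-> exists h, f = M 0 0 h) /\
      (exists phi : 'M[k]_(1 + n) -> k * k,
         (forall f g, Adj b f -> Adj b g ->
               phi (f + g) = ((phi f).1 + (phi g).1, (phi f).2 + (phi g).2)) /\
         (forall (c : k) f, Adj b f -> phi (c *: f) = (c * (phi f).1, c * (phi f).2)) /\
         (forall f g, Adj b f -> Adj b g ->
               phi (f *m g) = ((phi f).1 * (phi g).1, (phi f).2 * (phi g).2)) /\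
         phi 1%:M = (1, 1) /\
         (forall p, exists f, Adj b f /\ phi f = p) /\
         (forall f, Adj b f -> (phi f = (0, 0) <-> jacobson_rad (Adj b) f)) /\
         (forall f g, adjoint_pair b f g -> phi g = ((phi f).2, (phi f).1))) /\
      perp_indecomposable b.
Proof. exact: (main k hn). Qed.
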